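(* Let $t_1, t_2 \in \mathcal{L}_r$ with $t_1 =_{\mathcal{L}} t_2$. Then for all finite $E \subseteq \mathcal{X}$ and $S \in \mathbb{N}$: $B(E, S)$ is one of the sublevels of $t_1$ if and only if $B(E, S)$ is one of the sublevels of $t_2$.
   Context: $\mathcal{X}$ is a countable set of variables; a valuation is $\sigma\colon\mathcal{X}\to\mathbb{N}$. For finite $E\subseteq\mathcal{X}$, $x\in\mathcal{X}$, $S\in\mathbb{N}$, the sublevels $A(E,x,S)$ and $B(E,S)$ have values $[A(E,x,S)]_\sigma = 0$ if some $y\in E$ has $\sigma(y)=0$, and $\sigma(x)+S$ otherwise; $[B(E,S)]_\sigma=0$ if some $y\in E$ has $\sigma(y)=0$, and $S$ otherwise. $\mathcal{L}_s$ is the set of sublevels $A(E,x,S)$ with $x\in E$ and $B(E,S)$ with $S>0$. $t_1\leqslant_{\mathcal{L}} t_2$ (resp. $t_1 =_{\mathcal{L}} t_2$) means $[t_1]_\sigma\le[t_2]_\sigma$ (resp. $=$) for every valuation $\sigma$; $\max$ of a finite family is evaluated pointwise (empty max has value $0$). Two sublevels $u,v$ are incomparable if neither $u\leqslant_{\mathcal{L}} v$ nor $v\leqslant_{\mathcal{L}} u$. A minimal representation is a formal expression $\max(u_1,\ldots,u_n)$ where $\{u_1,\ldots,u_n\}$ is a finite set of elements of $\mathcal{L}_s$ that are pairwise incomparable; $\mathcal{L}_r$ is the set of minimal representations, and the $u_i$ are called its sublevels. *)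

(* Defs.v *)
From Stdlib Require Import List.
From HB Require Import structures.
From mathcomp Require Import all_boot.
From mathcomp Require Import finmap.
Set Implicit Arguments. Unset Strict Implicit. Unset Printing Implicit Defensive.

Section Sublevels.
Variable X : countType.

Inductive sublevel : Type :=
| SA : {fset X} -> X -> nat -> sublevel
| SB : {fset X} -> nat -> sublevel.

Definition sl_val (sigma : X -> nat) (u : sublevel) : nat :=
  match u with
  | SA E x s => if has (fun y => sigma y == 0) (enum_fset E) then 0 else sigma x + s
  | SB E s => if has (fun y => sigma y == 0) (enum_fset E) then 0 else s
  end.

Definition in_Ls (u : sublevel) : Prop :=
  match u with
  | SA E x _ => x \in E
  | SB _ s => 0 < s
  end.

Definition sl_le (u v : sublevel) : Prop :=
  forall sigma : X -> nat, sl_val sigma u <= sl_val sigma v.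

Definition incomparable (u v : sublevel) : Prop := ~ sl_le u v /\ ~ sl_le v u.

(* A minimal representation max(u_1,...,u_n): a finite list of sublevels of L_s,
   pairwise incomparable (hence in particular without repetitions). *)
Definition is_minrep (t : list sublevel) : Prop :=
  (forall u, In u t -> in_Ls u) /\
  (forall u v l1 l2 l3, t = l1 ++ u :: l2 ++ v :: l3 -> incomparable u v).

(* pointwise value of the max; empty max is 0 *)
Definition rep_val (sigma : X -> nat) (t : list sublevel) : nat :=
  \max_(u <- t) sl_val sigma u.

Definition L_eq (t1 t2 : list sublevel) : Prop :=
  forall sigma : X -> nat, rep_val sigma t1 = rep_val sigma t2.

End Sublevels.

(* Main.v *)
Require Import Defs.
From Stdlib Require Import List Classical.
From mathcomp Require Import all_boot finmap.
Set Implicit Arguments. Unset Strict Implicit. Unset Printing Implicit Defensive.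
Local Open Scope fset_scope.

Section Aux.
Variable X : countType.
Implicit Types (t : list (sublevel X)) (sigma : X -> nat).

Lemma zs_false sigma (E : {fset X}) :
  (forall y, y \in E -> sigma y != 0) ->
  has (fun y => sigma y == 0) (enum_fset E) = false.
Proof.
move=> H; apply/negbTE/hasPn => y /H; by move/negbTE->.
Qed.

Lemma zs_true sigma (E : {fset X}) y :
  y \in E -> sigma y = 0 -> has (fun y => sigma y == 0) (enum_fset E) = true.
Proof. by move=> yE sy; apply/hasP; exists y => //; apply/eqP. Qed.

Lemma max_ge sigma t s : 0 < s -> s <= rep_val sigma t ->
  exists u, In u t /\ s <= sl_val sigma u.
Proof.
rewrite /rep_val; elim: t => [|a t IH] s0; first by rewrite big_nil leqNgt s0.
rewrite big_cons leq_max => /orP [H|H].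
  by exists a; split => //; left.
by have [u [Hu Hs]] := IH s0 H; exists u; split => //; right.
Qed.

Lemma max_le sigma t b : (forall u, In u t -> sl_val sigma u <= b) ->
  rep_val sigma t <= b.
Proof.
rewrite /rep_val; elim: t => [|a t IH] H; first by rewrite big_nil.
rewrite big_cons geq_max H /=; last by left.
by apply: IH => u Hu; apply: H; right.
Qed.

Lemma in_max sigma t u : In u t -> sl_val sigma u <= rep_val sigma t.
Proof.
rewrite /rep_val; elim: t => [//|a t IH] [->|H]; rewrite big_cons.
  by rewrite leq_maxl.
by rewrite (leq_trans (IH H)) // leq_maxr.
Qed.

Lemma in_split' t (a : sublevel X) : In a t -> exists l1 l2, t = l1 ++ a :: l2.
Proof.
elim: t => [//|b t IH] [->|H]; first by exists [::], t.
by have [l1 [l2 ->]] := IH H; exists (b :: l1), l2.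
Qed.

Lemma in_cat' t1 t2 (a : sublevel X) : In a (t1 ++ t2) -> In a t1 \/ In a t2.
Proof.
elim: t1 => [|b t IH] /=; first by right.
by case=> [->|/IH [H|H]]; [left; left|left; right|right].
Qed.

Lemma two_in t (a b : sublevel X) : In a t -> In b t -> a <> b ->
  exists l1 l2 l3, t = l1 ++ a :: l2 ++ b :: l3 \/ t = l1 ++ b :: l2 ++ a :: l3.
Proof.
move=> Ha Hb Hab.
have [l1 [r Et]] := in_split' Ha.
move: Hb; rewrite Et => /in_cat' [Hb|[Hb|Hb]].
- have [m1 [m2 Em]] := in_split' Hb.
  by exists m1, m2, r; right; rewrite Em -catA.
- by case: Hab.
- have [m1 [m2 Em]] := in_split' Hb.
  by exists l1, m1, m2; left; rewrite Em.
Qed.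

Lemma minrep_cases t (E : {fset X}) S u : is_minrep t -> In (SB E S) t -> In u t ->
  u = SB E S \/ ~ sl_le (SB E S) u.
Proof.
move=> [_ Hinc] HB Hu.
case: (classic (u = SB E S)) => [->|Hne]; [by left|right].
have [l1 [l2 [l3 [Ht|Ht]]]] := two_in Hu HB Hne.
  by case: (Hinc _ _ _ _ _ Ht).
by case: (Hinc _ _ _ _ _ Ht).
Qed.

Definition sig1 (F : {fset X}) : X -> nat := fun y => if y \in F then 1 else 0.
Definition sig2 (F : {fset X}) (x : X) : X -> nat :=
  fun y => if y == x then 2 else if y \in F then 1 else 0.

Lemma smallB t E S E2 S2 : is_minrep t -> In (SB E S) t -> In (SB E2 S2) t ->
  SB E2 S2 <> SB E S -> (forall y, y \in E2 -> y \in E) -> S2 < S.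
Proof.
move=> Hm HB Hu Hne Hsub.
case: (minrep_cases Hm HB Hu) => // Hnl.
rewrite ltnNge; apply/negP => HS; apply: Hnl => sigma /=.
case: (boolP (has _ (enum_fset E))) => // /hasPn H.
rewrite zs_false //.
by move=> y /Hsub /H.
Qed.

Lemma smallA t E S E2 x S2 : is_minrep t -> In (SB E S) t -> In (SA E2 x S2) t ->
  (forall y, y \in E2 -> y \in E) -> S2.+1 < S.
Proof.
move=> Hm HB Hu Hsub.
have Hx : x \in E2 by have [H _] := Hm; exact: (H _ Hu).
case: (minrep_cases Hm HB Hu) => // Hnl.
rewrite ltnNge; apply/negP => HS; apply: Hnl => sigma /=.
case: (boolP (has _ (enum_fset E))) => // /hasPn H.
rewrite zs_false; last by move=> y /Hsub /H.
apply: (leq_trans HS); rewrite -addn1 addnC leq_add2r lt0n.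
exact: (H _ (Hsub _ Hx)).
Qed.

Lemma dir t1 t2 E S : is_minrep t1 -> is_minrep t2 -> L_eq t1 t2 ->
  In (SB E S) t1 -> In (SB E S) t2.
Proof.
move=> Hm1 Hm2 Heq HB.
have S0 : 0 < S by have [H _] := Hm1; exact: (H _ HB).
have Hup : rep_val (sig1 E) t1 <= S.
  apply: max_le => -[E2 x S2|E2 S2] Hu /=.
  - case: (boolP (has _ (enum_fset E2))) => // /hasPn H.
    have Hsub : forall y, y \in E2 -> y \in E.
      by move=> y /H; rewrite /sig1; case: (y \in E).
    have := smallA Hm1 HB Hu Hsub.
    have Hx : x \in E2 by have [H' _] := Hm1; exact: (H' _ Hu).
    by rewrite /sig1 Hsub // add1n => /ltnW.
  - case: (boolP (has _ (enum_fset E2))) => // /hasPn H.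
    have Hsub : forall y, y \in E2 -> y \in E.
      by move=> y /H; rewrite /sig1; case: (y \in E).
    case: (classic (SB E2 S2 = SB E S)) => [[_ ->] //|Hne].
    exact/ltnW/(smallB Hm1 HB Hu Hne Hsub).
have Hlow : S <= rep_val (sig1 E) t2.
  rewrite -Heq; have := in_max (sig1 E) HB; rewrite /= zs_false //.
  by move=> y; rewrite /sig1 => ->.
have [u [Hu Hs]] := max_ge S0 Hlow.
case: u Hu Hs => [E2 x S2|E2 S2] Hu /=;
  case: (boolP (has _ (enum_fset E2))) => [_|/hasPn H]; try by rewrite leqNgt S0.
-
  have Hsub : forall y, y \in E2 -> y \in E.
    by move=> y /H; rewrite /sig1; case: (y \in E).
  have Hx : x \in E2 by have [H' _] := Hm2; exact: (H' _ Hu).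
  have HxE := Hsub _ Hx.
  rewrite /sig1 HxE add1n => HS.
  have Hs2 : S2.+2 <= rep_val (sig2 E x) t2.
    have := in_max (sig2 E x) Hu; rewrite /= zs_false.
      by rewrite /sig2 eqxx add2n.
    by move=> y /Hsub; rewrite /sig2; case: (y == x) => // ->.
  have : rep_val (sig2 E x) t1 <= S2.+1.
    apply: max_le => -[E3 x3 S3|E3 S3] Hv /=.
    + case: (boolP (has _ (enum_fset E3))) => // /hasPn H3.
      have Hsub3 : forall y, y \in E3 -> y \in E.
        move=> y /H3; rewrite /sig2; case: (y == x) /eqP => [->|] //.
        by case: (y \in E).
      have := smallA Hm1 HB Hv Hsub3.
      have : sig2 E x x3 <= 2 by rewrite /sig2; case: (x3 == x); case: (x3 \in E).
      move=> h1 h2; apply: (leq_trans (leq_add h1 (leqnn S3))).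
      by rewrite add2n; apply: leq_trans HS.
    + case: (boolP (has _ (enum_fset E3))) => // /hasPn H3.
      have Hsub3 : forall y, y \in E3 -> y \in E.
        move=> y /H3; rewrite /sig2; case: (y == x) /eqP => [->|] //.
        by case: (y \in E).
      case: (classic (SB E3 S3 = SB E S)) => [[_ ->] //|Hne].
      exact/(leq_trans _ HS)/ltnW/(smallB Hm1 HB Hv Hne Hsub3).
  by rewrite Heq => /(leq_trans Hs2); rewrite ltnn.
-
  have Hsub : forall y, y \in E2 -> y \in E.
    by move=> y /H; rewrite /sig1; case: (y \in E).
  move=> HS.
  have ES : S2 = S.
    apply/eqP; rewrite eqn_leq HS andbT.
    have := in_max (sig1 E) Hu; rewrite /= zs_false //.
    by rewrite -Heq => /leq_trans; apply.
  subst S2.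
  case: (boolP (E `<=` E2)) => [HEE|].
    have EE : E2 = E by apply/eqP; rewrite eqEfsubset HEE andbT; apply/fsubsetP.
    by rewrite -EE.
  case/fsubsetPn => z zE zE2.
  have : S <= rep_val (sig1 E2) t1.
    rewrite Heq; have := in_max (sig1 E2) Hu; rewrite /= zs_false //.
    by move=> y; rewrite /sig1 => ->.
  have : rep_val (sig1 E2) t1 < S.
    rewrite ltnNge; apply/negP => /(max_ge S0) [v [Hv]].
    case: v Hv => [E3 x3 S3|E3 S3] Hv /=;
      case: (boolP (has _ (enum_fset E3))) => [_|/hasPn H3]; try by rewrite leqNgt S0.
    + have Hsub3 : forall y, y \in E3 -> y \in E2.
        by move=> y /H3; rewrite /sig1; case: (y \in E2).
      have Hsub3' : forall y, y \in E3 -> y \in E by move=> y /Hsub3 /Hsub.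
      have := smallA Hm1 HB Hv Hsub3'.
      have Hx3 : x3 \in E3 by have [H' _] := Hm1; exact: (H' _ Hv).
      rewrite /sig1 Hsub3 // add1n => h1 h2.
      by have := leq_trans h1 h2; rewrite ltnn.
    + have Hsub3 : forall y, y \in E3 -> y \in E2.
        by move=> y /H3; rewrite /sig1; case: (y \in E2).
      case: (classic (SB E3 S3 = SB E S)) => [[eE _]|Hne].
        by subst E3; move: zE2; rewrite (Hsub3 _ zE).
      have := smallB Hm1 HB Hv Hne (fun y h => Hsub _ (Hsub3 _ h)).
      by rewrite ltnNge => /negP.
  by move=> h1 h2; have := leq_ltn_trans h2 h1; rewrite ltnn.
Qed.

End Aux.

Theorem proposition32 (X : countType) (t1 t2 : list (sublevel X)) :
  is_minrep t1 -> is_minrep t2 -> L_eq t1 t2 ->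
  forall (E : {fset X}) (S : nat), In (SB E S) t1 <-> In (SB E S) t2.
Proof.
move=> H1 H2 Heq E S; split; first exact: dir.
by apply: dir => // sigma; rewrite Heq.
Qed.
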